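(* Let $(V,Y_1,\mathbf 1,T_1)$ be a vertex algebra (in dimension 1) equipped with an action of $\mathfrak c_D$ such that the generator $T_1\in\mathfrak c_D$ acts as the translation operator of $V$. If the action of $\mathfrak c_D$ is local and $\mathfrak c_D\mathbf 1=0$, then for all $a\in V$ and $2\le\alpha,\beta\le D$: $$[T_\alpha,Y_1(a,x)]=Y_1(T_\alpha a,x),\qquad [H,Y_1(a,x)]=Y_1(Ha,x)+x\partial_xY_1(a,x),$$ $$[\Omega_{\alpha\beta},Y_1(a,x)]=Y_1(\Omega_{\alpha\beta}a,x),\qquad [\Omega_{1\alpha},Y_1(a,x)]=Y_1(\Omega_{1\alpha}a,x)+xY_1(T_\alpha a,x),$$ $$[C_\alpha,Y_1(a,x)]=Y_1(C_\alpha a,x)+2xY_1(\Omega_{1\alpha}a,x)+x^2Y_1(T_\alpha a,x),$$ $$[C_1,Y_1(a,x)]=Y_1(C_1a,x)-2xY_1(Ha,x)-x^2\partial_xY_1(a,x).$$ Conversely, if these commutation relations hold for all $a\in V$, then the action of $\mathfrak c_D$ is local and annihilates the vacuum.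
   Context: A vertex algebra (in dimension 1) is a complex superspace $V$ with even vacuum $\mathbf 1$, even map $a\otimes b\mapsto Y_1(a,x)b\in V(\!(x)\!)$, and even $T_1$ with $T_1\mathbf 1=0$, $Y_1(\mathbf 1,x)=\mathrm{id}$, $Y_1(a,x)\mathbf 1\in V[\![x]\!]$ with value $a$ at $x=0$, $[T_1,Y_1(a,x)]=\partial_xY_1(a,x)$, and locality: $(x-y)^{N}[Y_1(a,x),Y_1(b,y)]=0$ for some $N=N_{a,b}$ (supercommutator). An operator $X\in\operatorname{End}V$ is local if for all $a,b$ there is $N$ with $(x-y)^N[[X,Y_1(a,x)],Y_1(b,y)]=0$; the action of $\mathfrak c_D$ is local if every element acts as a local operator. $\mathfrak c_D$ is the Lie algebra spanned by $T_\alpha$, $H$, $\Omega_{\alpha\beta}=-\Omega_{\beta\alpha}$, $C_\alpha$ ($1\le\alpha,\beta\le D$) with relations: $[H,\Omega_{\alpha\beta}]=[T_\alpha,T_\beta]=[C_\alpha,C_\beta]=0$; $[\Omega_{\alpha\beta},T_\gamma]=\delta_{\alpha\gamma}T_\beta-\delta_{\beta\gamma}T_\alpha$; $[\Omega_{\alpha\beta},C_\gamma]=\delta_{\alpha\gamma}C_\beta-\delta_{\beta\gamma}C_\alpha$; $[H,T_\alpha]=T_\alpha$; $[H,C_\alpha]=-C_\alpha$; $[T_\alpha,C_\beta]=2\delta_{\alpha\beta}H-2\Omega_{\alpha\beta}$; $[\Omega_{\alpha_1\beta_1},\Omega_{\alpha_2\beta_2}]=\delta_{\alpha_1\alpha_2}\Omega_{\beta_1\beta_2}+\delta_{\beta_1\beta_2}\Omega_{\alpha_1\alpha_2}-\delta_{\alpha_1\beta_2}\Omega_{\beta_1\alpha_2}-\delta_{\beta_1\alpha_2}\Omega_{\alpha_1\beta_2}$.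 It acts on $V$ by even operators. *)

(* Defs.v *)
From mathcomp Require Import all_boot all_order all_algebra.
From mathcomp Require Import reals complex.
Set Implicit Arguments. Unset Strict Implicit. Unset Printing Implicit Defensive.
Import Order.TTheory GRing.Theory Num.Theory.
Local Open Scope ring_scope.

Section Defs.
Variable (R : realType).
Local Notation C := R[i].
Variable (V : lmodType C).

Definition linop (f : V -> V) : Prop :=
  forall (c : C) (u v : V), f (c *: u + v) = c *: f u + f v.

Definition subspace (S : V -> Prop) : Prop :=
  S 0 /\ forall (c : C) (u v : V), S u -> S v -> S (c *: u + v).

Definition superspace (ev od : V -> Prop) : Prop :=
  [/\ subspace ev, subspace od,
      (forall v, exists v0 v1, [/\ ev v0, od v1 & v = v0 + v1]) &
      (forall v, ev v -> od v -> v = 0)].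

Definition homog (ev od : V -> Prop) (p : bool) (v : V) : Prop :=
  if p then od v else ev v.

Definition even_op (ev od : V -> Prop) (f : V -> V) : Prop :=
  forall p v, homog ev od p v -> homog ev od p (f v).

(* ---------- formal series ----------
   A field Y : V -> int -> V -> V encodes Y_1(a,x)b = sum_n (Y a n b) x^n. *)

Definition opcomm (X F : V -> V) (v : V) : V := X (F v) - F (X v).

(* coefficient of x^m y^k in the supercommutator [A(x), B(y)] applied to v,
   where A(x) = sum_m A m x^m, B(y) = sum_k B k y^k and s = (-1)^{p(A)p(B)} *)
Definition scomm_coef (s : C) (A B : int -> V -> V) (m k : int) (v : V) : V :=
  A m (B k v) - s *: B k (A m v).

(* coefficient of x^m y^k in (x - y)^N F(x,y), F = sum F m k x^m y^k *)
Definition mulxyN (N : nat) (F : int -> int -> V) (m k : int) : V :=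
  \sum_(j < N.+1) (((-1) ^+ j * ('C(N, j))%:R) *:
                    F (m - (N - j)%:Z) (k - (j : nat)%:Z)).

Definition psign (p q : bool) : C := (-1) ^+ (p && q).

Definition vertex_algebra (ev od : V -> Prop) (vac : V)
  (Y : V -> int -> V -> V) (T1 : V -> V) : Prop :=
  superspace ev od /\ ev vac /\
      (forall n (c : C) a a' b, Y (c *: a + a') n b = c *: Y a n b + Y a' n b) /\
      (forall a n, linop (Y a n)) /\
      (forall p q a b n, homog ev od p a -> homog ev od q b ->
                         homog ev od (p (+) q) (Y a n b)) /\
      (* Y(a,x)b in V((x)) *)
      (forall a b, exists N : int, forall n, n < N -> Y a n b = 0) /\
      (linop T1 /\ even_op ev od T1 /\ T1 vac = 0) /\
      (forall n b, Y vac n b = if n == 0 then b else 0) /\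
      (* Y(a,x)1 in V[[x]] with value a at x = 0 *)
      (forall a n, n < 0 -> Y a n vac = 0) /\
      (forall a, Y a 0 vac = a) /\
      (* [T1, Y(a,x)] = d/dx Y(a,x) *)
      (forall a n b, opcomm T1 (Y a n) b = Y a (n + 1) b *~ (n + 1)) /\
      (forall p q a b, homog ev od p a -> homog ev od q b ->
         exists N : nat, forall m k v,
           mulxyN N (fun m k => scomm_coef (psign p q) (Y a) (Y b) m k v) m k
           = 0).

Definition local_op (ev od : V -> Prop) (Y : V -> int -> V -> V) (X : V -> V)
  : Prop :=
  forall p q a b, homog ev od p a -> homog ev od q b ->
    exists N : nat, forall m k v,
      mulxyN N (fun m k => scomm_coef (psign p q)
                   (fun m => opcomm X (Y a m)) (Y b) m k v) m k = 0.

(* ---------- the Lie algebra c_D acting on V ----------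
   The action is given by the images of the spanning elements
   T_al, H, Om_{al be}, C_al (1 <= al, be <= D), which must be even linear
   operators satisfying the defining relations of c_D. *)
Definition inD (D al : nat) : bool := (1 <= al <= D)%N.

Definition cD_action (ev od : V -> Prop) (D : nat)
  (Tg : nat -> V -> V) (H : V -> V) (Om : nat -> nat -> V -> V)
  (Cg : nat -> V -> V) : Prop :=
      (forall al, inD D al -> linop (Tg al) /\ even_op ev od (Tg al)) /\
      (linop H /\ even_op ev od H) /\
      (forall al be, inD D al -> inD D be -> linop (Om al be) /\ even_op ev od (Om al be)) /\
      (forall al, inD D al -> linop (Cg al) /\ even_op ev od (Cg al)) /\
      (forall al be v, inD D al -> inD D be -> Om al be v = - Om be al v) /\
      (forall al be v, inD D al -> inD D be ->
         [/\ opcomm H (Om al be) v = 0, opcomm (Tg al) (Tg be) v = 0 &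
             opcomm (Cg al) (Cg be) v = 0]) /\
      (forall al be ga v, inD D al -> inD D be -> inD D ga ->
         opcomm (Om al be) (Tg ga) v =
           (if al == ga then Tg be v else 0) - (if be == ga then Tg al v else 0)
         /\
         opcomm (Om al be) (Cg ga) v =
           (if al == ga then Cg be v else 0) - (if be == ga then Cg al v else 0)) /\
      (forall al be v, inD D al -> inD D be ->
         [/\ opcomm H (Tg al) v = Tg al v, opcomm H (Cg al) v = - Cg al v &
             opcomm (Tg al) (Cg be) v =
               2%:R *: ((if al == be then H v else 0) - Om al be v)]) /\
      (forall a1 b1 a2 b2 v, inD D a1 -> inD D b1 -> inD D a2 -> inD D b2 ->
         opcomm (Om a1 b1) (Om a2 b2) v =
           (if a1 == a2 then Om b1 b2 v else 0)
         + (if b1 == b2 then Om a1 a2 v else 0)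
         - (if a1 == b2 then Om b1 a2 v else 0)
         - (if b1 == a2 then Om a1 b2 v else 0)).

(* the operator by which a general element
   sum_al t_al T_al + h H + sum_{al,be} o_{al be} Om_{al be} + sum_al c_al C_al
   of c_D acts *)
Definition cD_elt (D : nat)
  (Tg : nat -> V -> V) (H : V -> V) (Om : nat -> nat -> V -> V)
  (Cg : nat -> V -> V)
  (t : nat -> C) (h : C) (o : nat -> nat -> C) (c : nat -> C) (v : V) : V :=
  \sum_(1 <= al < D.+1) t al *: Tg al v + h *: H v
  + \sum_(1 <= al < D.+1) \sum_(1 <= be < D.+1) o al be *: Om al be v
  + \sum_(1 <= al < D.+1) c al *: Cg al v.

Definition cD_local (ev od : V -> Prop) (Y : V -> int -> V -> V) (D : nat)
  Tg H Om Cg : Prop :=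
  forall t h o c, local_op ev od Y (cD_elt D Tg H Om Cg t h o c).

Definition cD_kills_vac (vac : V) (D : nat) Tg H Om Cg : Prop :=
  forall t h o c, cD_elt D Tg H Om Cg t h o c vac = 0.

(* the commutation relations of the theorem, coefficientwise:
   coefficient of x^n of both sides applied to b *)
Definition cD_comm_relations (Y : V -> int -> V -> V) (D : nat)
  (Tg : nat -> V -> V) (H : V -> V) (Om : nat -> nat -> V -> V)
  (Cg : nat -> V -> V) : Prop :=
  forall (a b : V) (n : int),
  [/\
      opcomm H (Y a n) b = Y (H a) n b + Y a n b *~ n,
      opcomm (Cg 1%N) (Y a n) b =
        Y (Cg 1%N a) n b - Y (H a) (n - 1) b *+ 2 - Y a (n - 1) b *~ (n - 1) &
      forall al be : nat, (2 <= al <= D)%N -> (2 <= be <= D)%N ->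
      [/\
          opcomm (Tg al) (Y a n) b = Y (Tg al a) n b,
          opcomm (Om al be) (Y a n) b = Y (Om al be a) n b,
          opcomm (Om 1%N al) (Y a n) b = Y (Om 1%N al a) n b + Y (Tg al a) (n - 1) b &
          opcomm (Cg al) (Y a n) b =
            Y (Cg al a) n b + Y (Om 1%N al a) (n - 1) b *+ 2 + Y (Tg al a) (n - 2) b]].

End Defs.

(* Main.v *)
Require Import Defs.
From mathcomp Require Import all_boot all_order all_algebra.
From mathcomp Require Import reals complex.
From mathcomp Require Import zify ring.
Import Order.TTheory GRing.Theory Num.Theory.
Local Open Scope ring_scope.


Section Gen.
Context {R : realType} {V : lmodType R[i]}.
Implicit Types (f g : V -> V) (u v w : V).

Lemma linopD f : linop f -> forall u v, f (u + v) = f u + f v.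
Proof. by move=> hf u v; have := hf 1 u v; rewrite !scale1r. Qed.
Lemma linop0 f : linop f -> f 0 = 0.
Proof. by move=> hf; apply: (addrI (f 0)); rewrite addr0 -linopD // addr0. Qed.
Lemma linopZ f : linop f -> forall c u, f (c *: u) = c *: f u.
Proof. by move=> hf c u; rewrite -[c *: u]addr0 hf linop0 // addr0. Qed.
Lemma linopN f : linop f -> forall u, f (- u) = - f u.
Proof. by move=> hf u; rewrite -scaleN1r linopZ // scaleN1r. Qed.
Lemma linopB f : linop f -> forall u v, f (u - v) = f u - f v.
Proof. by move=> hf u v; rewrite linopD // linopN. Qed.
Lemma linopMn f : linop f -> forall u n, f (u *+ n) = f u *+ n.
Proof. by move=> hf u n; rewrite -scaler_nat linopZ // scaler_nat. Qed.
Lemma linopMz f : linop f -> forall u n, f (u *~ n) = f u *~ n.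
Proof. by move=> hf u n; rewrite -scaler_int linopZ // scaler_int. Qed.
Lemma linop_sum f (I : Type) (r : seq I) (P : pred I) (F : I -> V) :
  linop f -> f (\sum_(i <- r | P i) F i) = \sum_(i <- r | P i) f (F i).
Proof. move=> hf; apply: (big_morph f (linopD f hf) (linop0 f hf)). Qed.

Lemma mulxyN_ext N (F G : int -> int -> V) m k :
  (forall m k, F m k = G m k) -> mulxyN N F m k = mulxyN N G m k.
Proof. by move=> h; apply: eq_bigr => j _; rewrite h. Qed.

Lemma mulxyN_lin N c (F G : int -> int -> V) m k :
  mulxyN N (fun m k => c *: F m k + G m k) m k = c *: mulxyN N F m k + mulxyN N G m k.
Proof.
rewrite /mulxyN scaler_sumr -big_split; apply: eq_bigr => j _.
by rewrite scalerDr !scalerA mulrC.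
Qed.

Lemma mulxyN_shift N (F : int -> int -> V) m k :
  mulxyN N (fun m k => F (m - 1) k) m k = mulxyN N F (m - 1) k.
Proof. by apply: eq_bigr => j _; congr (_ *: F _ _); rewrite addrAC. Qed.

Lemma mulxyN_S N (F : int -> int -> V) m k :
  mulxyN N.+1 F m k = mulxyN N F (m - 1) k - mulxyN N F m (k - 1).
Proof.
rewrite /mulxyN big_ord_recl /=.
rewrite [X in _ = X - _]big_ord_recl /=.
under eq_bigr => i _ do rewrite /bump /= binS natrD mulrDr scalerDl.
rewrite big_split /= big_ord_recr /= (bin_small (ltnSn N)) mulr0 scale0r !addr0.
rewrite -!addrA; congr (_ + _).
  by rewrite !bin0 !expr0 !mulr1; congr (_ *: F _ _); lia.
congr (_ + _).
  apply: eq_bigr => i _; rewrite /bump /=; congr (_ *: F _ _); have := ltn_ord i; lia.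
rewrite -sumrN; apply: eq_bigr => i _; rewrite exprS mulN1r mulNr scaleNr.
congr (- (_ *: F _ _)); have := ltn_ord i; lia.
Qed.

Lemma mulxyN_D N (F : int -> int -> V) m k :
  mulxyN N.+1 (fun m k => F (m + 1) k *~ (m + 1)) m k =
  mulxyN N.+1 F (m + 1) k *~ (m + 1) - mulxyN N F m k *+ N.+1.
Proof.
rewrite /mulxyN big_ord_recr [X in _ = X *~ _ - _]big_ord_recr /=.
rewrite mulrzDl mulrz_suml -sumrMnl [RHS]addrAC -sumrB; congr (_ + _).
  apply: eq_bigr => i _ /=.
  have hi := ltn_ord i.
  have e1 : m - (N.+1 - i)%N%:Z + 1 = m - (N - i)%N%:Z by lia.
  have e2 : m + 1 - (N.+1 - i)%N%:Z = m - (N - i)%N%:Z by lia.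
  rewrite e1 e2.
  set w := F _ _; set c := _ * _; set d := _ * _.
  rewrite -[c *: (w *~ _)]scalerMzr !(scalerMzl c) -[(d *: w) *+ _]scaler_nat scalerA -scalerBl; congr (_ *: _).
  have hb := congr1 (fun n => n%:R : R[i]) (mul_bin_down N.+1 i).
  rewrite /= !natrM natrB ?(ltnW hi) // in hb.
  rewrite -[c *~ (m - _)]mulrzr -[c *~ (m + 1)]mulrzr intrB intrD /=.
  have e3 : ((N - i)%N%:~R : R[i]) = (N - i)%:R by [].
  rewrite e3 natrB ?hi // /c /d.
  have -> : (N.+1%:R : R[i]) * ((-1) ^+ i * 'C(N, i)%:R) = (-1) ^+ i * (N.+1%:R * 'C(N, i)%:R)
    by ring.
  rewrite hb /=; ring.
by rewrite subnn !subr0 scalerMzr.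
Qed.
End Gen.

Definition locFd {R : realType} {V : lmodType R[i]} (ev od : V -> Prop)
  (Y : V -> int -> V -> V) p (F : int -> V -> V) := forall q b, homog ev od q b ->
  exists N : nat, forall m k v,
    mulxyN N (fun m k => scomm_coef (psign R p q) F (Y b) m k v) m k = 0.

Section VA.
Context {R : realType} {V : lmodType R[i]} {ev od : V -> Prop} {vac : V}
  {Y : V -> int -> V -> V} {T1 : V -> V} (VA : vertex_algebra ev od vac Y T1).
Local Notation locF := (locFd ev od Y).

Lemma VA_super : superspace ev od. Proof. by case: VA. Qed.
Lemma Yadd a a' n b : Y (a + a') n b = Y a n b + Y a' n b.
Proof. by case: VA => _ [_ [h _]]; have := h n 1 a a' b; rewrite !scale1r. Qed.
Lemma Ylin a n : linop (Y a n). Proof. by case: VA => _ [_ [_ [h _]]]. Qed.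
Lemma T1lin : linop T1. Proof. by case: VA => _ [_ [_ [_ [_ [_ [[h _] _]]]]]]. Qed.
Lemma T1vac : T1 vac = 0. Proof. by case: VA => _ [_ [_ [_ [_ [_ [[_ [_ h]] _]]]]]]. Qed.
Lemma Yvac n b : Y vac n b = if n == 0 then b else 0.
Proof. by case: VA => _ [_ [_ [_ [_ [_ [_ [h _]]]]]]]. Qed.
Lemma Yneg a n : n < 0 -> Y a n vac = 0.
Proof. by case: VA => _ [_ [_ [_ [_ [_ [_ [_ [h _]]]]]]]]; apply: h. Qed.
Lemma Y0 a : Y a 0 vac = a.
Proof. by case: VA => _ [_ [_ [_ [_ [_ [_ [_ [_ [h _]]]]]]]]]. Qed.
Lemma T1der a n b : opcomm T1 (Y a n) b = Y a (n + 1) b *~ (n + 1).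
Proof. by case: VA => _ [_ [_ [_ [_ [_ [_ [_ [_ [_ [h _]]]]]]]]]]. Qed.
Lemma Yloc p q a b : homog ev od p a -> homog ev od q b ->
  exists N : nat, forall m k v,
    mulxyN N (fun m k => scomm_coef (psign R p q) (Y a) (Y b) m k v) m k = 0.
Proof. by case: VA => _ [_ [_ [_ [_ [_ [_ [_ [_ [_ [_ h]]]]]]]]]]; apply: h. Qed.

Lemma decomp (f g : V -> V) :
  (forall u v, f (u + v) = f u + f v) -> (forall u v, g (u + v) = g u + g v) ->
  (forall p a, homog ev od p a -> f a = g a) -> forall a, f a = g a.
Proof.
move=> hf hg h a; case: VA_super => _ _ hd _.
have [a0 [a1 [h0 h1 ->]]] := hd a.
by rewrite hf hg (h false a0) // (h true a1).
Qed.

Lemma mono N (F : int -> int -> V) :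
  (forall m k, mulxyN N F m k = 0) -> forall M, (N <= M)%N -> forall m k, mulxyN M F m k = 0.
Proof.
move=> h M /subnKC <-; elim: (M - N)%N => [|d IH] m k; first by rewrite addn0.
by rewrite addnS mulxyN_S !IH subrr.
Qed.


Lemma locF_ext p F G : (forall m v, F m v = G m v) -> locF p F -> locF p G.
Proof.
move=> e h q b hb; have [N hN] := h q b hb; exists N => m k v.
rewrite -(hN m k v); apply: mulxyN_ext => m' k'.
by rewrite /scomm_coef !e.
Qed.

Lemma scomm_lin s c F G b m k v :
  scomm_coef s (fun m v => c *: F m v + G m v) (Y b) m k v =
  c *: scomm_coef s F (Y b) m k v + scomm_coef s G (Y b) m k v.
Proof.
rewrite /scomm_coef (Ylin b k) scalerDr !scalerBr !scalerA (mulrC s c).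
rewrite opprD !addrA; congr (_ + _); rewrite addrAC.
by [].
Qed.

Lemma locF_lin p c F G : locF p F -> locF p G -> locF p (fun m v => c *: F m v + G m v).
Proof.
move=> hF hG q b hb; have [N1 h1] := hF q b hb; have [N2 h2] := hG q b hb.
exists (N1 + N2)%N => m k v.
rewrite (mulxyN_ext _ _ _ _ _ (fun m k => scomm_lin _ _ _ _ _ _ _ _)) mulxyN_lin.
rewrite (mono _ _ (fun m k => h1 m k v) _ (leq_addr _ _)) (mono _ _ (fun m k => h2 m k v) _ (leq_addl _ _)).
by rewrite scaler0 addr0.
Qed.

Lemma locF0 p : locF p (fun _ _ => 0).
Proof.
move=> q b hb; exists 0%N => m k v.
rewrite /mulxyN big1 // => j _; rewrite /scomm_coef (linop0 _ (Ylin b _)).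
by rewrite scaler0 subrr scaler0.
Qed.

Lemma locF_shift p F : locF p F -> locF p (fun m => F (m - 1)).
Proof.
move=> h q b hb; have [N hN] := h q b hb; exists N => m k v.
by rewrite (mulxyN_shift N (fun m k => scomm_coef (psign R p q) F (Y b) m k v)) hN.
Qed.

Lemma locF_Y p c : homog ev od p c -> locF p (Y c).
Proof. by move=> hc q b hb; apply: Yloc. Qed.

Lemma locF_T1 p a : homog ev od p a -> locF p (fun m v => opcomm T1 (Y a m) v).
Proof.
move=> ha q b hb; have [N hN] := Yloc _ _ _ _ ha hb; exists N.+1 => m k v.
rewrite (mulxyN_ext _ _ (fun m k =>
   scomm_coef (psign R p q) (Y a) (Y b) (m + 1) k v *~ (m + 1)) m k); last first.
  by move=> m' k'; rewrite /scomm_coef !T1der (linopMz _ (Ylin _ _)) mulrzBl scalerMzr.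
rewrite (mulxyN_D N (fun m k => scomm_coef (psign R p q) (Y a) (Y b) m k v)) hN (mono _ _ (fun m k => hN m k v) _ (leqnSn N)).
by rewrite mul0rz mul0rn subr0.
Qed.


Lemma uniqF p F : (forall m u v, F m (u + v) = F m u + F m v) ->
  (forall m, F m vac = 0) -> locF p F -> forall m b, F m b = 0.
Proof.
move=> hadd hvac hl m b.
have F0 : forall m, F m 0 = 0.
  by move=> m'; apply: (addrI (F m' 0)); rewrite -hadd !addr0.
apply: (decomp (F m) (fun _ => 0) (hadd m) (fun _ _ => esym (addr0 0))) => q c hc.
have [N hN] := hl q c hc.
have := hN (m + N%:Z) 0 vac.
rewrite /mulxyN big_ord_recl big1 ?addr0 => [|i _].
  rewrite /scomm_coef hvac (linop0 _ (Ylin _ _)) scaler0 subr0 subn0 expr0 bin0 mul1r scale1r.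
  by rewrite addrK Y0.
by rewrite /scomm_coef hvac (linop0 _ (Ylin _ _)) scaler0 subr0 Yneg ?F0 ?scaler0 //.
Qed.

Lemma locF_scale p c F : locF p F -> locF p (fun m v => c *: F m v).
Proof.
move=> h; apply: (locF_ext p (fun m v => c *: F m v + 0)); first by move=> *; rewrite addr0.
by apply: locF_lin => //; apply: locF0.
Qed.

Lemma locF_add p F G : locF p F -> locF p G -> locF p (fun m v => F m v + G m v).
Proof.
move=> hF hG; apply: (locF_ext p (fun m v => 1 *: F m v + G m v)); first by move=> *; rewrite scale1r.
exact: locF_lin.
Qed.

Lemma locF_sub p F G : locF p F -> locF p G -> locF p (fun m v => F m v - G m v).
Proof.
move=> hF hG; apply: (locF_ext p (fun m v => (-1) *: G m v + F m v)).
  by move=> *; rewrite scaleN1r addrC.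
exact: locF_lin.
Qed.

Lemma locF_sum p (r : seq nat) (F : nat -> int -> V -> V) :
  (forall i, i \in r -> locF p (F i)) -> locF p (fun m v => \sum_(i <- r) F i m v).
Proof.
elim: r => [|x r IH] h.
  by apply: (locF_ext p (fun _ _ => 0)); [move=> *; rewrite big_nil | exact: locF0].
apply: (locF_ext p (fun m v => F x m v + \sum_(i <- r) F i m v)).
  by move=> *; rewrite big_cons.
apply: locF_add; first by apply: h; rewrite inE eqxx.
by apply: IH => i hi; apply: h; rewrite inE hi orbT.
Qed.

Lemma opT1vac a n : opcomm T1 (Y a n) vac = T1 (Y a n vac).
Proof. by rewrite /opcomm T1vac (linop0 _ (Ylin _ _)) subr0. Qed.

Lemma Eder a n : T1 (Y a n vac) = Y a (n + 1) vac *~ (n + 1).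
Proof. by rewrite -opT1vac T1der. Qed.

Lemma EderN a (n : nat) : Y a n.+1 vac *+ n.+1 = T1 (Y a n vac).
Proof. by rewrite Eder pmulrn; congr (Y a _ vac *~ _); lia. Qed.

Lemma T1Em1 a n : T1 (Y a (n - 1) vac) = Y a n vac *~ n.
Proof. by rewrite Eder subrK. Qed.

Lemma T1Em2 a n : T1 (Y a (n - 2) vac) = Y a (n - 1) vac *~ (n - 1).
Proof. by rewrite Eder; have -> : n - 2 + 1 = n - 1 by lia. Qed.

Lemma mulrn_inj (u w : V) n : u *+ n.+1 = w *+ n.+1 -> u = w.
Proof.
rewrite -[u *+ _]scaler_nat -[w *+ _]scaler_nat => /(scalerI _); apply.
by rewrite pnatr_eq0.
Qed.

Lemma rec_uniq (F G W : int -> V) :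
  (forall n, n < 0 -> F n = G n) -> F 0 = G 0 ->
  (forall n : nat, F n.+1 *+ n.+1 = T1 (F n) - W n) ->
  (forall n : nat, G n.+1 *+ n.+1 = T1 (G n) - W n) -> forall n, F n = G n.
Proof.
move=> hneg h0 hF hG [n|n]; last by apply: hneg.
elim: n => [|n IH] //; apply: (@mulrn_inj _ _ n).
by rewrite hF hG IH.
Qed.

Lemma XE_rec X a (n : nat) : linop X ->
  X (Y a n.+1 vac) *+ n.+1 = T1 (X (Y a n vac)) - opcomm T1 X (Y a n vac).
Proof.
move=> hX; rewrite -(linopMn _ hX) EderN /opcomm.
by rewrite opprB addrC subrK.
Qed.

Lemma gen_rel (X : V -> V) (Rf : V -> int -> V -> V) :
  linop X -> X vac = 0 ->
  (forall p a, homog ev od p a -> locF p (fun m v => opcomm X (Y a m) v)) ->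
  (forall p a, homog ev od p a -> locF p (Rf a)) ->
  (forall a n u v, Rf a n (u + v) = Rf a n u + Rf a n v) ->
  (forall a a' n b, Rf (a + a') n b = Rf a n b + Rf a' n b) ->
  (forall a n, X (Y a n vac) = Rf a n vac) ->
  forall a n b, opcomm X (Y a n) b = Rf a n b.
Proof.
move=> hX hXv hlX hlR hRb hRa hvac a n b.
apply: (decomp (fun a => opcomm X (Y a n) b) (fun a => Rf a n b)) => //.
  by move=> u v; rewrite /opcomm Yadd (linopD _ hX) Yadd opprD addrACA.
move=> p c hc; apply/eqP; rewrite -subr_eq0; apply/eqP.
pose A := fun m v => (-1) *: Rf c m v + opcomm X (Y c m) v.
have := uniqF p A _ _ _ n b; rewrite /A scaleN1r addrC; apply.
- move=> m u v.
  have e : opcomm X (Y c m) (u + v) = opcomm X (Y c m) u + opcomm X (Y c m) v.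
    by rewrite /opcomm (linopD _ (Ylin _ _)) (linopD _ hX) (linopD _ hX) (linopD _ (Ylin _ _)) opprD addrACA.
  by rewrite e hRb scalerDr addrACA.
- by move=> m; rewrite /opcomm hXv (linop0 _ (Ylin _ _)) subr0 hvac scaleN1r addNr.
- by apply: locF_lin; [apply: hlR | apply: hlX].
Qed.

End VA.

Section CD.
Context {R : realType} {V : lmodType R[i]} {ev od : V -> Prop} {vac : V}
  {Y : V -> int -> V -> V} {T1 : V -> V} (VA : vertex_algebra ev od vac Y T1)
  {D : nat} {Tg : nat -> V -> V} {H : V -> V} {Om : nat -> nat -> V -> V}
  {Cg : nat -> V -> V} (CA : cD_action ev od D Tg H Om Cg)
  (HT : forall v, Tg 1%N v = T1 v) (HD : (0 < D)%N).
Local Notation locF := (locFd ev od Y).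

Lemma in1 : inD D 1. Proof. by rewrite /inD. Qed.
Lemma in2 al : (2 <= al <= D)%N -> inD D al.
Proof. by rewrite /inD; lia. Qed.

Lemma Tlin al : inD D al -> linop (Tg al). Proof. by case: CA => h _ /h[]. Qed.
Lemma Tev al : inD D al -> even_op ev od (Tg al). Proof. by case: CA => h _ /h[]. Qed.
Lemma Hlin : linop H. Proof. by case: CA => _ [[]]. Qed.
Lemma Hev : even_op ev od H. Proof. by case: CA => _ [[]]. Qed.
Lemma Olin al be : inD D al -> inD D be -> linop (Om al be).
Proof. by case: CA => _ [_ [h _]] ha hb; case: (h al be ha hb). Qed.
Lemma Oev al be : inD D al -> inD D be -> even_op ev od (Om al be).
Proof. by case: CA => _ [_ [h _]] ha hb; case: (h al be ha hb). Qed.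
Lemma Clin al : inD D al -> linop (Cg al). Proof. by case: CA => _ [_ [_ [h _]]] /h[]. Qed.
Lemma Cev al : inD D al -> even_op ev od (Cg al). Proof. by case: CA => _ [_ [_ [h _]]] /h[]. Qed.
Lemma Oanti al be v : inD D al -> inD D be -> Om al be v = - Om be al v.
Proof. by case: CA => _ [_ [_ [_ [h _]]]]; apply: h. Qed.
Lemma comm0 al be v : inD D al -> inD D be ->
  [/\ opcomm H (Om al be) v = 0, opcomm (Tg al) (Tg be) v = 0 &
      opcomm (Cg al) (Cg be) v = 0].
Proof. by case: CA => _ [_ [_ [_ [_ [h _]]]]]; apply: h. Qed.
Lemma OmTC al be ga v : inD D al -> inD D be -> inD D ga ->
  opcomm (Om al be) (Tg ga) v =
    (if al == ga then Tg be v else 0) - (if be == ga then Tg al v else 0) /\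
  opcomm (Om al be) (Cg ga) v =
    (if al == ga then Cg be v else 0) - (if be == ga then Cg al v else 0).
Proof. by case: CA => _ [_ [_ [_ [_ [_ [h _]]]]]]; apply: h. Qed.
Lemma HTC al be v : inD D al -> inD D be ->
  [/\ opcomm H (Tg al) v = Tg al v, opcomm H (Cg al) v = - Cg al v &
      opcomm (Tg al) (Cg be) v = 2%:R *: ((if al == be then H v else 0) - Om al be v)].
Proof. by case: CA => _ [_ [_ [_ [_ [_ [_ [h _]]]]]]]; apply: h. Qed.

Lemma opcommC (A B : V -> V) u : opcomm A B u = - opcomm B A u.
Proof. by rewrite /opcomm opprB. Qed.

Lemma Om11 v : Om 1%N 1%N v = 0.
Proof.
have h := Oanti 1 1 v in1 in1.
have : Om 1%N 1%N v *+ 2 = 0 *+ 2 by rewrite mulr2n {1}h addNr mul0rn.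
exact: (mulrn_inj _ _ 1).
Qed.

Lemma ge2_ne1 al : (2 <= al)%N -> (al == 1%N) = false.
Proof. by move=> h; apply/eqP; lia. Qed.

Lemma WT al u : (2 <= al <= D)%N -> opcomm T1 (Tg al) u = 0.
Proof.
move=> h; have [_ h2 _] := comm0 1 al u in1 (in2 _ h).
by move: h2; rewrite /opcomm !HT.
Qed.

Lemma WH u : opcomm T1 H u = - T1 u.
Proof.
have [h1 _ _] := HTC 1 1 u in1 in1.
by move: h1; rewrite /opcomm !HT => h1; rewrite -opprB h1.
Qed.

Lemma WO al be u : (2 <= al <= D)%N -> (2 <= be <= D)%N -> opcomm T1 (Om al be) u = 0.
Proof.
move=> ha hb; have [h1 _] := OmTC al be 1 u (in2 _ ha) (in2 _ hb) in1.
move: h1; rewrite !ge2_ne1 ?subrr; [|lia|lia].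
by rewrite /opcomm !HT => h1; rewrite -opprB h1 oppr0.
Qed.

Lemma WO1 al u : (2 <= al <= D)%N -> opcomm T1 (Om 1%N al) u = - Tg al u.
Proof.
move=> ha; have [h1 _] := OmTC 1 al 1 u in1 (in2 _ ha) in1.
move: h1; rewrite eqxx ge2_ne1 ?subr0; [|lia].
by rewrite /opcomm !HT => h1; rewrite -opprB h1.
Qed.

Lemma WC al u : (2 <= al <= D)%N -> opcomm T1 (Cg al) u = - (2%:R *: Om 1%N al u).
Proof.
move=> ha; have [_ _ h3] := HTC 1 al u in1 (in2 _ ha).
move: h3; rewrite /opcomm !HT eq_sym ge2_ne1 ?sub0r ?scalerN; [|lia].
by [].
Qed.

Lemma WC1 u : opcomm T1 (Cg 1%N) u = 2%:R *: H u.
Proof.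
have [_ _ h3] := HTC 1 1 u in1 in1.
by move: h3; rewrite /opcomm !HT eqxx Om11 subr0.
Qed.


Lemma regroupC (w x y : V) (a b c d e f : int) : a = c + e -> b = d + f ->
  w + x *~ a + y *~ b = w + x *~ c + y *~ d + (x *~ e + y *~ f).
Proof.
move=> -> ->; rewrite !mulrzDr !addrA; congr (_ + _).
by rewrite addrAC.
Qed.

Lemma regroupC1 (w x y : V) (a b c d e f : int) : a = c + e -> b = d + f ->
  w - x *~ a - y *~ b = w - x *~ c - y *~ d - (x *~ e + y *~ f).
Proof.
move=> -> ->; rewrite !mulrzDr !opprD !addrA; congr (_ + _).
by rewrite addrAC.
Qed.

Lemma vac_gen X a (G W : int -> V) : linop X -> (forall n, n < 0 -> G n = 0) ->
  G 0 = X a -> (forall n : nat, opcomm T1 X (Y a n vac) = W n) ->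
  (forall n : nat, G n.+1 *+ n.+1 = T1 (G n) - W n) -> forall n, X (Y a n vac) = G n.
Proof.
move=> hX hneg h0 hW hG.
apply: (rec_uniq (fun n => X (Y a n vac)) G W) => //.
- by move=> n hn; rewrite hneg // (Yneg VA) // (linop0 _ hX).
- by rewrite (Y0 VA).
- by move=> n; rewrite (XE_rec VA) // hW.
Qed.

Lemma e1 (n : nat) : n.+1%:Z - 1 = n. Proof. lia. Qed.
Lemma e2 (n : nat) : n.+1%:Z - 2 = n%:Z - 1. Proof. lia. Qed.

Lemma vacT al a n : (2 <= al <= D)%N -> Tg al (Y a n vac) = Y (Tg al a) n vac.
Proof.
move=> ha; move: n; apply: (vac_gen _ _ (fun n => Y (Tg al a) n vac) (fun _ => 0) (Tlin _ (in2 _ ha))) => //.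
- by move=> m hm; rewrite (Yneg VA).
- by rewrite (Y0 VA).
- by move=> m; rewrite WT.
- by move=> m; rewrite (EderN VA) subr0.
Qed.

Lemma vacO al be a n : (2 <= al <= D)%N -> (2 <= be <= D)%N ->
  Om al be (Y a n vac) = Y (Om al be a) n vac.
Proof.
move=> ha hb; move: n; apply: (vac_gen _ _ (fun n => Y (Om al be a) n vac) (fun _ => 0) (Olin _ _ (in2 _ ha) (in2 _ hb))) => //.
- by move=> m hm; rewrite (Yneg VA).
- by rewrite (Y0 VA).
- by move=> m; rewrite WO.
- by move=> m; rewrite (EderN VA) subr0.
Qed.

Lemma vacH a n : H (Y a n vac) = Y (H a) n vac + opcomm T1 (Y a (n - 1)) vac.
Proof.
move: n; apply: (vac_gen _ _ (fun n => Y (H a) n vac + opcomm T1 (Y a (n - 1)) vac) (fun n : int => - T1 (Y a n vac)) Hlin) => //.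
- move=> m hm; rewrite (opT1vac VA) !(Yneg VA) ?(linop0 _ (T1lin VA)) ?addr0 //.
  by lia.
- by rewrite (opT1vac VA) (Y0 VA) (Yneg VA) // (linop0 _ (T1lin VA)) addr0.
- by move=> m; rewrite WH.
move=> m; rewrite e1 !(opT1vac VA) mulrnDl (EderN VA) (linopD _ (T1lin VA)).
rewrite (T1Em1 VA) (linopMz _ (T1lin VA)) opprK -pmulrn mulrSr addrA.
by [].
Qed.

Lemma vacO1 al a n : (2 <= al <= D)%N ->
  Om 1%N al (Y a n vac) = Y (Om 1%N al a) n vac + Y (Tg al a) (n - 1) vac.
Proof.
move=> ha.
move: n; apply: (vac_gen _ _ (fun n => Y (Om 1%N al a) n vac + Y (Tg al a) (n - 1) vac) (fun n : int => - Y (Tg al a) n vac) (Olin _ _ in1 (in2 _ ha))) => //.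
- move=> m hm; rewrite !(Yneg VA) ?addr0 //; lia.
- by rewrite (Y0 VA) (Yneg VA) // addr0.
- by move=> m; rewrite WO1 // vacT.
move=> m; rewrite e1 mulrnDl (EderN VA) (linopD _ (T1lin VA)).
by rewrite (T1Em1 VA) opprK -pmulrn mulrSr addrA.
Qed.

Lemma vacC al a n : (2 <= al <= D)%N ->
  Cg al (Y a n vac) = Y (Cg al a) n vac + Y (Om 1%N al a) (n - 1) vac *+ 2
                      + Y (Tg al a) (n - 2) vac.
Proof.
move=> ha.
move: n; apply: (vac_gen _ _ (fun n => Y (Cg al a) n vac + Y (Om 1%N al a) (n - 1) vac *+ 2 + Y (Tg al a) (n - 2) vac) (fun n : int => - (2%:R *: (Y (Om 1%N al a) n vac
           + Y (Tg al a) (n - 1) vac))) (Clin _ (in2 _ ha))) => //.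
- move=> m hm; rewrite !(Yneg VA) ?mul0rn ?addr0 //; lia.
- by rewrite (Y0 VA) !(Yneg VA) // mul0rn !addr0.
- by move=> m; rewrite WC // vacO1.
move=> m; rewrite e1 e2 mulrnDl mulrnDl (EderN VA) (linopD _ (T1lin VA)) (linopD _ (T1lin VA)) (linopMn _ (T1lin VA)).
rewrite (T1Em1 VA) (T1Em2 VA) opprK scalerDr !scaler_nat !pmulrn -!mulrzA.
by apply: regroupC; lia.
Qed.

Lemma vacC1 a n :
  Cg 1%N (Y a n vac) = Y (Cg 1%N a) n vac - Y (H a) (n - 1) vac *+ 2
                      - opcomm T1 (Y a (n - 2)) vac.
Proof.
move: n; apply: (vac_gen _ _ (fun n => Y (Cg 1%N a) n vac - Y (H a) (n - 1) vac *+ 2 - opcomm T1 (Y a (n - 2)) vac) (fun n : int => 2%:R *: (Y (H a) n vac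
           + opcomm T1 (Y a (n - 1)) vac)) (Clin _ in1)) => //.
- move=> m hm; rewrite (opT1vac VA) !(Yneg VA) ?(linop0 _ (T1lin VA)) ?mul0rn ?subr0 //; lia.
- by rewrite (opT1vac VA) (Y0 VA) !(Yneg VA) // (linop0 _ (T1lin VA)) mul0rn !subr0.
- by move=> m; rewrite WC1 vacH.
move=> m; rewrite e1 e2 !(opT1vac VA) !mulrnBl (EderN VA) !(linopB _ (T1lin VA)).
rewrite (linopMn _ (T1lin VA)) (T1Em1 VA) (T1Em2 VA) (linopMz _ (T1lin VA)) !(T1Em1 VA).
rewrite scalerDr !scaler_nat !pmulrn -!mulrzA.
by apply: regroupC1; lia.
Qed.


Lemma sum_delta al (f : nat -> V) : inD D al ->
  \sum_(1 <= i < D.+1) ((i == al)%:R : R[i]) *: f i = f al.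
Proof.
move=> ha; rewrite (bigD1_seq al) /=; last exact: iota_uniq.
  rewrite eqxx scale1r big1 ?addr0 // => i /negbTE ->; exact: scale0r.
by rewrite mem_index_iota; move: ha; rewrite /inD; lia.
Qed.

Lemma sum_zero (f : nat -> V) : \sum_(1 <= i < D.+1) (0 : R[i]) *: f i = 0.
Proof. by rewrite big1 // => i _; rewrite scale0r. Qed.

Lemma sum_zero2 (f : nat -> nat -> V) :
  \sum_(1 <= i < D.+1) \sum_(1 <= j < D.+1) (0 : R[i]) *: f i j = 0.
Proof. by rewrite big1 // => i _; rewrite sum_zero. Qed.

Definition z1 : nat -> R[i] := fun _ => 0.
Definition z2 : nat -> nat -> R[i] := fun _ _ => 0.

Lemma eltT al v : inD D al ->
  cD_elt D Tg H Om Cg (fun i => (i == al)%:R) 0 z2 z1 v = Tg al v.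
Proof.
by move=> ha; rewrite /cD_elt sum_delta // scale0r sum_zero2 sum_zero !addr0.
Qed.

Lemma eltH v : cD_elt D Tg H Om Cg z1 1 z2 z1 v = H v.
Proof. by rewrite /cD_elt sum_zero sum_zero2 sum_zero scale1r add0r !addr0. Qed.

Lemma eltC al v : inD D al ->
  cD_elt D Tg H Om Cg z1 0 z2 (fun i => (i == al)%:R) v = Cg al v.
Proof.
by move=> ha; rewrite /cD_elt sum_delta // scale0r sum_zero2 sum_zero !add0r.
Qed.

Lemma eltO al be v : inD D al -> inD D be ->
  cD_elt D Tg H Om Cg z1 0 (fun i j => ((i == al) && (j == be))%:R) z1 v = Om al be v.
Proof.
move=> ha hb; rewrite /cD_elt sum_zero scale0r sum_zero !add0r addr0.
rewrite (eq_bigr (fun i => (i == al)%:R *: Om i be v)).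
  exact: (sum_delta al (fun i => Om i be v) ha).
move=> i _; case: (i == al) => /=.
  by rewrite scale1r; exact: (sum_delta be (fun j => Om i j v) hb).
by rewrite sum_zero scale0r.
Qed.

Lemma from_elt t h o c (G : V -> V) : (forall v, cD_elt D Tg H Om Cg t h o c v = G v) ->
  cD_local ev od Y D Tg H Om Cg ->
  forall p a, homog ev od p a -> locF p (fun m v => opcomm G (Y a m) v).
Proof.
move=> e LOC p a ha q b hb; have [N hN] := LOC t h o c p q a b ha hb.
exists N => m k v; rewrite -(hN m k v); apply: mulxyN_ext => m' k'.
by rewrite /scomm_coef /opcomm !e.
Qed.

Lemma vac_elt t h o c (G : V -> V) : (forall v, cD_elt D Tg H Om Cg t h o c v = G v) ->
  cD_kills_vac vac D Tg H Om Cg -> G vac = 0.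
Proof. by move=> e KV; rewrite -e KV. Qed.

Lemma homogE (f : V -> V) p a : even_op ev od f -> homog ev od p a -> homog ev od p (f a).
Proof. by move=> h; apply: h. Qed.


Lemma locSh2 p F : locF p F -> locF p (fun m v => F (m - 2) v).
Proof.
move=> h; apply: (locF_ext p (fun m v => F (m - 1 - 1) v)).
  by move=> m v; have -> : m - 1 - 1 = m - 2 by lia.
exact: (locF_shift p (fun m => F (m - 1)) (locF_shift p F h)).
Qed.

Lemma locM2 p F : locF p F -> locF p (fun m v => F m v *+ 2).
Proof.
move=> h; apply: (locF_ext p (fun m v => 2%:R *: F m v)); first by move=> *; rewrite scaler_nat.
exact: (locF_scale VA).
Qed.

Lemma forward : cD_local ev od Y D Tg H Om Cg -> cD_kills_vac vac D Tg H Om Cg ->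
  cD_comm_relations Y D Tg H Om Cg.
Proof.
move=> LOC KV.
have T1l := T1lin VA.
have rT al a n b : (2 <= al <= D)%N -> opcomm (Tg al) (Y a n) b = Y (Tg al a) n b.
  move=> h; move: a n b; have hi := in2 _ h.
  apply: (gen_rel VA (Tg al) (fun a n b => Y (Tg al a) n b)).
  - exact: Tlin.
  - exact: (vac_elt _ _ _ _ _ (fun v => eltT al v hi) KV).
  - exact: (from_elt _ _ _ _ _ (fun v => eltT al v hi) LOC).
  - by move=> p a ha; apply: (locF_Y VA); apply: homogE (Tev _ hi) ha.
  - by move=> a n u v; rewrite (linopD _ (Ylin VA _ _)).
  - by move=> a a' n b; rewrite (linopD _ (Tlin _ hi)) (Yadd VA).
  - by move=> a n; rewrite vacT.
have rO al be a n b : (2 <= al <= D)%N -> (2 <= be <= D)%N ->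
    opcomm (Om al be) (Y a n) b = Y (Om al be a) n b.
  move=> h h'; move: a n b; have hi := in2 _ h; have hi' := in2 _ h'.
  apply: (gen_rel VA (Om al be) (fun a n b => Y (Om al be a) n b)).
  - exact: Olin.
  - exact: (vac_elt _ _ _ _ _ (fun v => eltO al be v hi hi') KV).
  - exact: (from_elt _ _ _ _ _ (fun v => eltO al be v hi hi') LOC).
  - by move=> p a ha; apply: (locF_Y VA); apply: homogE (Oev _ _ hi hi') ha.
  - by move=> a n u v; rewrite (linopD _ (Ylin VA _ _)).
  - by move=> a a' n b; rewrite (linopD _ (Olin _ _ hi hi')) (Yadd VA).
  - by move=> a n; rewrite vacO.
have rO1 al a n b : (2 <= al <= D)%N ->
    opcomm (Om 1%N al) (Y a n) b = Y (Om 1%N al a) n b + Y (Tg al a) (n - 1) b.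
  move=> h; move: a n b; have hi := in2 _ h.
  apply: (gen_rel VA (Om 1%N al) (fun a n b => Y (Om 1%N al a) n b + Y (Tg al a) (n - 1) b)).
  - exact: Olin in1 hi.
  - exact: (vac_elt _ _ _ _ _ (fun v => eltO 1 al v in1 hi) KV).
  - exact: (from_elt _ _ _ _ _ (fun v => eltO 1 al v in1 hi) LOC).
  - move=> p a ha; apply: (locF_add VA).
      by apply: (locF_Y VA); apply: homogE (Oev _ _ in1 hi) ha.
    by apply: (locF_shift p (Y (Tg al a))); apply: (locF_Y VA); apply: homogE (Tev _ hi) ha.
  - by move=> a n u v; rewrite !(linopD _ (Ylin VA _ _)) addrACA.
  - by move=> a a' n b; rewrite (linopD _ (Olin _ _ in1 hi)) (linopD _ (Tlin _ hi)) !(Yadd VA) addrACA.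
  - by move=> a n; rewrite vacO1.
have rH a n b : opcomm H (Y a n) b = Y (H a) n b + opcomm T1 (Y a (n - 1)) b.
  move: a n b.
  apply: (gen_rel VA H (fun a n b => Y (H a) n b + opcomm T1 (Y a (n - 1)) b)).
  - exact: Hlin.
  - exact: (vac_elt _ _ _ _ _ eltH KV).
  - exact: (from_elt _ _ _ _ _ eltH LOC).
  - move=> p a ha; apply: (locF_add VA).
      by apply: (locF_Y VA); apply: homogE Hev ha.
    exact: (locF_shift p (fun m v => opcomm T1 (Y a m) v) (locF_T1 VA _ _ ha)).
  - by move=> a n u v; rewrite !(T1der VA) !(linopD _ (Ylin VA _ _)) mulrzDl addrACA.
  - by move=> a a' n b; rewrite !(T1der VA) (linopD _ Hlin) !(Yadd VA) mulrzDl addrACA.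
  - by move=> a n; rewrite vacH.
have rC al a n b : (2 <= al <= D)%N ->
    opcomm (Cg al) (Y a n) b = Y (Cg al a) n b + Y (Om 1%N al a) (n - 1) b *+ 2
                               + Y (Tg al a) (n - 2) b.
  move=> h; move: a n b; have hi := in2 _ h.
  apply: (gen_rel VA (Cg al) (fun a n b => Y (Cg al a) n b + Y (Om 1%N al a) (n - 1) b *+ 2
                               + Y (Tg al a) (n - 2) b)).
  - exact: Clin.
  - exact: (vac_elt _ _ _ _ _ (fun v => eltC al v hi) KV).
  - exact: (from_elt _ _ _ _ _ (fun v => eltC al v hi) LOC).
  - move=> p a ha; apply: (locF_add VA); first apply: (locF_add VA).
    + by apply: (locF_Y VA); apply: homogE (Cev _ hi) ha.
    + apply: (locM2 p (fun m v => Y (Om 1%N al a) (m - 1) v)).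
      by apply: (locF_shift p (Y (Om 1%N al a))); apply: (locF_Y VA); apply: homogE (Oev _ _ in1 hi) ha.
    + by apply: (locSh2 p (Y (Tg al a))); apply: (locF_Y VA); apply: homogE (Tev _ hi) ha.
  - move=> a n u v; rewrite !(linopD _ (Ylin VA _ _)) mulrnDl.
    by rewrite (addrACA (Y _ _ u)) [LHS]addrACA.
  - move=> a a' n b; rewrite (linopD _ (Clin _ hi)) (linopD _ (Olin _ _ in1 hi)) (linopD _ (Tlin _ hi)).
    by rewrite !(Yadd VA) mulrnDl (addrACA (Y _ _ b)) [LHS]addrACA.
  - by move=> a n; rewrite vacC.
have rC1 a n b : opcomm (Cg 1%N) (Y a n) b = Y (Cg 1%N a) n b - Y (H a) (n - 1) b *+ 2
                               - opcomm T1 (Y a (n - 2)) b.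
  move: a n b.
  apply: (gen_rel VA (Cg 1%N) (fun a n b => Y (Cg 1%N a) n b - Y (H a) (n - 1) b *+ 2
                               - opcomm T1 (Y a (n - 2)) b)).
  - exact: Clin in1.
  - exact: (vac_elt _ _ _ _ _ (fun v => eltC 1 v in1) KV).
  - exact: (from_elt _ _ _ _ _ (fun v => eltC 1 v in1) LOC).
  - move=> p a ha; apply: (locF_sub VA); first apply: (locF_sub VA).
    + by apply: (locF_Y VA); apply: homogE (Cev _ in1) ha.
    + apply: (locM2 p (fun m v => Y (H a) (m - 1) v)).
      by apply: (locF_shift p (Y (H a))); apply: (locF_Y VA); apply: homogE Hev ha.
    + exact: (locSh2 p (fun m v => opcomm T1 (Y a m) v) (locF_T1 VA _ _ ha)).
  - move=> a n u v; rewrite !(T1der VA) !(linopD _ (Ylin VA _ _)) mulrnDl mulrzDl.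
    by rewrite !opprD (addrACA (Y _ _ u)) [LHS]addrACA.
  - move=> a a' n b; rewrite !(T1der VA) (linopD _ (Clin _ in1)) (linopD _ Hlin).
    by rewrite !(Yadd VA) mulrnDl mulrzDl !opprD (addrACA (Y _ _ b)) [LHS]addrACA.
  - by move=> a n; rewrite vacC1.
move=> a b n; split.
- by rewrite rH (T1der VA) subrK.
- by rewrite rC1 (T1der VA); have -> : n - 2 + 1 = n - 1 by lia.
- by move=> al be ha hb; split; [exact: rT | exact: rO | exact: rO1 | exact: rC].
Qed.

Lemma split_al al : inD D al -> al = 1%N \/ (2 <= al <= D)%N.
Proof. rewrite /inD => h; case: (al =P 1%N); [by left | move=> ?; right; lia]. Qed.

Lemma opYvac X n b : linop X -> opcomm X (Y vac n) b = 0.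
Proof.
move=> hX; rewrite /opcomm !(Yvac VA); case: (n == 0); first by rewrite subrr.
by rewrite (linop0 _ hX) subrr.
Qed.

Lemma sum_in0 (F : nat -> V) : (forall i, inD D i -> F i = 0) ->
  \sum_(1 <= i < D.+1) F i = 0.
Proof.
move=> h; rewrite big_nat_cond big1 // => i /andP [hi _]; apply: h.
by rewrite /inD; lia.
Qed.

Lemma regroup2 (x y z t : V) : (x + z) - (y + t) = (x - y) + (z - t).
Proof. by rewrite opprD addrACA. Qed.

Lemma opcomm_elt t h o c a m v :
  opcomm (cD_elt D Tg H Om Cg t h o c) (Y a m) v =
     \sum_(1 <= al < D.+1) t al *: opcomm (Tg al) (Y a m) v
     + h *: opcomm H (Y a m) v
     + \sum_(1 <= al < D.+1) \sum_(1 <= be < D.+1) o al be *: opcomm (Om al be) (Y a m) v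
     + \sum_(1 <= al < D.+1) c al *: opcomm (Cg al) (Y a m) v.
Proof.
have YL := Ylin VA a m.
have e1 : forall (f : nat -> R[i]) (G : nat -> V -> V),
    \sum_(1 <= i < D.+1) f i *: opcomm (G i) (Y a m) v =
    \sum_(1 <= i < D.+1) f i *: G i (Y a m v) - Y a m (\sum_(1 <= i < D.+1) f i *: G i v).
  move=> f G; rewrite (linop_sum _ _ _ _ _ YL) -sumrB; apply: eq_bigr => i _.
  by rewrite /opcomm (linopZ _ YL) scalerBr.
have e3 : \sum_(1 <= al < D.+1) \sum_(1 <= be < D.+1) o al be *: opcomm (Om al be) (Y a m) v =
    \sum_(1 <= al < D.+1) \sum_(1 <= be < D.+1) o al be *: Om al be (Y a m v)
    - Y a m (\sum_(1 <= al < D.+1) \sum_(1 <= be < D.+1) o al be *: Om al be v).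
  rewrite (linop_sum _ _ _ _ _ YL) -sumrB; apply: eq_bigr => i _.
  exact: e1.
rewrite e1 e3 e1 /opcomm /cD_elt !(linopD _ YL) (linopZ _ YL) scalerBr.
by rewrite !regroup2.
Qed.

Lemma backward : cD_comm_relations Y D Tg H Om Cg ->
  cD_local ev od Y D Tg H Om Cg /\ cD_kills_vac vac D Tg H Om Cg.
Proof.
move=> REL.
have rT al a n b : (2 <= al <= D)%N -> opcomm (Tg al) (Y a n) b = Y (Tg al a) n b.
  by move=> h; have [_ _ h3] := REL a b n; have [] := h3 al al h h.
have rO al be a n b : (2 <= al <= D)%N -> (2 <= be <= D)%N ->
    opcomm (Om al be) (Y a n) b = Y (Om al be a) n b.
  by move=> h h'; have [_ _ h3] := REL a b n; have [] := h3 al be h h'.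
have rO1 al a n b : (2 <= al <= D)%N ->
    opcomm (Om 1%N al) (Y a n) b = Y (Om 1%N al a) n b + Y (Tg al a) (n - 1) b.
  by move=> h; have [_ _ h3] := REL a b n; have [] := h3 al al h h.
have rC al a n b : (2 <= al <= D)%N ->
    opcomm (Cg al) (Y a n) b = Y (Cg al a) n b + Y (Om 1%N al a) (n - 1) b *+ 2
                               + Y (Tg al a) (n - 2) b.
  by move=> h; have [_ _ h3] := REL a b n; have [] := h3 al al h h.
have rH a n b : opcomm H (Y a n) b = Y (H a) n b + opcomm T1 (Y a (n - 1)) b.
  by have [h1 _ _] := REL a b n; rewrite h1 (T1der VA) subrK.
have rC1 a n b : opcomm (Cg 1%N) (Y a n) b = Y (Cg 1%N a) n b - Y (H a) (n - 1) b *+ 2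
                               - opcomm T1 (Y a (n - 2)) b.
  by have [_ h2 _] := REL a b n; rewrite h2 (T1der VA); have -> : n - 2 + 1 = n - 1 by lia.
have vT al : inD D al -> Tg al vac = 0.
  case/split_al => [->|h]; first by rewrite HT (T1vac VA).
  by have := rT al vac 0 vac h; rewrite opYvac ?(Y0 VA) //; last exact: Tlin (in2 _ h).
have vH : H vac = 0.
  by have := rH vac 0 vac; rewrite opYvac ?(Y0 VA) ?(opT1vac VA) ?(Yvac VA) // ?(linop0 _ (T1lin VA)) ?addr0 //; last exact: Hlin.
have vO1 al : (2 <= al <= D)%N -> Om 1%N al vac = 0.
  move=> h; have := rO1 al vac 0 vac h; rewrite opYvac ?(Y0 VA) ?(Yneg VA) ?addr0 //.
  exact: Olin in1 (in2 _ h).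
have vO al be : inD D al -> inD D be -> Om al be vac = 0.
  move=> ha hb; case/split_al: (ha) => [->|h]; case/split_al: (hb) => [->|h'].
  - exact: Om11.
  - exact: vO1.
  - by rewrite Oanti ?vO1 ?oppr0 //; exact: in1.
  - by have := rO al be vac 0 vac h h'; rewrite opYvac ?(Y0 VA) //; apply: Olin.
have vC al : inD D al -> Cg al vac = 0.
  case/split_al => [->|h].
    have := rC1 vac 0 vac; rewrite opYvac ?(Y0 VA) ?(opT1vac VA) ?(Yneg VA) //; last exact: Clin in1.
    by rewrite (linop0 _ (T1lin VA)) mul0rn !subr0.
  have := rC al vac 0 vac h; rewrite opYvac ?(Y0 VA) ?(Yneg VA) // ?mul0rn ?addr0 //.
  exact: Clin (in2 _ h).
split; last first.
  move=> t h o c; rewrite /cD_elt vH scaler0 addr0.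
  rewrite !sum_in0 ?addr0 // => i hi.
  - by rewrite vC // scaler0.
  - by rewrite sum_in0 // => j hj; rewrite vO // scaler0.
  - by rewrite vT // scaler0.
have lT al p a : inD D al -> homog ev od p a -> locF p (fun m v => opcomm (Tg al) (Y a m) v).
  move=> hal ha; case/split_al: hal => [->|h].
    apply: (locF_ext p (fun m v => opcomm T1 (Y a m) v)); last exact: (locF_T1 VA _ _ ha).
    by move=> m v; rewrite /opcomm !HT.
  apply: (locF_ext p (Y (Tg al a))); first by move=> m v; rewrite rT.
  by apply: (locF_Y VA); apply: homogE (Tev _ (in2 _ h)) ha.
have lH p a : homog ev od p a -> locF p (fun m v => opcomm H (Y a m) v).
  move=> ha; apply: (locF_ext p (fun m v => Y (H a) m v + opcomm T1 (Y a (m - 1)) v)).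
    by move=> m v; rewrite rH.
  apply: (locF_add VA); first by apply: (locF_Y VA); apply: homogE Hev ha.
  exact: (locF_shift p (fun m v => opcomm T1 (Y a m) v) (locF_T1 VA _ _ ha)).
have lO1 al p a : (2 <= al <= D)%N -> homog ev od p a ->
    locF p (fun m v => opcomm (Om 1%N al) (Y a m) v).
  move=> h ha; apply: (locF_ext p (fun m v => Y (Om 1%N al a) m v + Y (Tg al a) (m - 1) v)).
    by move=> m v; rewrite rO1.
  apply: (locF_add VA); first by apply: (locF_Y VA); apply: homogE (Oev _ _ in1 (in2 _ h)) ha.
  by apply: (locF_shift p (Y (Tg al a))); apply: (locF_Y VA); apply: homogE (Tev _ (in2 _ h)) ha.
have lO al be p a : inD D al -> inD D be -> homog ev od p a ->
    locF p (fun m v => opcomm (Om al be) (Y a m) v).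
  move=> ha0 hb0 ha; case/split_al: (ha0) => [->|h]; case/split_al: (hb0) => [->|h'].
  - apply: (locF_ext p (fun _ _ => 0)); last exact: (locF0 VA).
    by move=> m v; rewrite /opcomm !Om11 (linop0 _ (Ylin VA _ _)) subrr.
  - exact: lO1.
  - apply: (locF_ext p (fun m v => (-1) *: opcomm (Om 1%N al) (Y a m) v)).
      move=> m v; rewrite scaleN1r /opcomm !(Oanti al 1 _ ha0 in1).
      by rewrite (linopN _ (Ylin VA _ _)) opprB opprK addrC.
    by apply: (locF_scale VA); apply: lO1.
  - apply: (locF_ext p (Y (Om al be a))); first by move=> m v; rewrite rO.
    by apply: (locF_Y VA); apply: homogE (Oev _ _ ha0 hb0) ha.
have lC al p a : inD D al -> homog ev od p a -> locF p (fun m v => opcomm (Cg al) (Y a m) v).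
  move=> hal ha; case/split_al: (hal) => [->|h].
    apply: (locF_ext p (fun m v => Y (Cg 1%N a) m v - Y (H a) (m - 1) v *+ 2
                               - opcomm T1 (Y a (m - 2)) v)); first by move=> m v; rewrite rC1.
    apply: (locF_sub VA); first apply: (locF_sub VA).
    + by apply: (locF_Y VA); apply: homogE (Cev _ in1) ha.
    + apply: (locM2 p (fun m v => Y (H a) (m - 1) v)).
      by apply: (locF_shift p (Y (H a))); apply: (locF_Y VA); apply: homogE Hev ha.
    + exact: (locSh2 p (fun m v => opcomm T1 (Y a m) v) (locF_T1 VA _ _ ha)).
  have hi := in2 _ h.
  apply: (locF_ext p (fun m v => Y (Cg al a) m v + Y (Om 1%N al a) (m - 1) v *+ 2
                               + Y (Tg al a) (m - 2) v)); first by move=> m v; rewrite rC.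
  apply: (locF_add VA); first apply: (locF_add VA).
  + by apply: (locF_Y VA); apply: homogE (Cev _ hi) ha.
  + apply: (locM2 p (fun m v => Y (Om 1%N al a) (m - 1) v)).
    by apply: (locF_shift p (Y (Om 1%N al a))); apply: (locF_Y VA); apply: homogE (Oev _ _ in1 hi) ha.
  + by apply: (locSh2 p (Y (Tg al a))); apply: (locF_Y VA); apply: homogE (Tev _ hi) ha.
move=> t h o c p q a b ha hb.
have L : locF p (fun m v => opcomm (cD_elt D Tg H Om Cg t h o c) (Y a m) v).
  apply: (locF_ext p (fun m v => \sum_(1 <= al < D.+1) t al *: opcomm (Tg al) (Y a m) v
     + h *: opcomm H (Y a m) v
     + \sum_(1 <= al < D.+1) \sum_(1 <= be < D.+1) o al be *: opcomm (Om al be) (Y a m) v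
     + \sum_(1 <= al < D.+1) c al *: opcomm (Cg al) (Y a m) v)).
    by move=> m v; rewrite opcomm_elt.
  apply: (locF_add VA); first apply: (locF_add VA); first apply: (locF_add VA).
  - apply: (locF_sum VA) => i; rewrite mem_index_iota => hi.
    by apply: (locF_scale VA); apply: lT => //; rewrite /inD; lia.
  - by apply: (locF_scale VA); apply: lH.
  - apply: (locF_sum VA) => i; rewrite mem_index_iota => hi.
    apply: (locF_sum VA) => j; rewrite mem_index_iota => hj.
    by apply: (locF_scale VA); apply: lO => //; rewrite /inD; lia.
  - apply: (locF_sum VA) => i; rewrite mem_index_iota => hi.
    by apply: (locF_scale VA); apply: lC => //; rewrite /inD; lia.
exact: L q b hb.
Qed.

End CD.

Theorem mainTheorem3 (R : realType) (V : lmodType R[i])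
  (ev od : V -> Prop) (vac : V) (Y : V -> int -> V -> V) (T1 : V -> V)
  (D : nat) (Tg : nat -> V -> V) (H : V -> V) (Om : nat -> nat -> V -> V)
  (Cg : nat -> V -> V) :
  (0 < D)%N ->
  vertex_algebra ev od vac Y T1 ->
  cD_action ev od D Tg H Om Cg ->
  (forall v, Tg 1%N v = T1 v) ->
  (cD_local ev od Y D Tg H Om Cg /\ cD_kills_vac vac D Tg H Om Cg) <->
  cD_comm_relations Y D Tg H Om Cg.
Proof.
move=> HD VA CA HT; split.
  by case=> L K; apply: (forward VA CA HT HD).
exact: (backward VA CA HT HD).
Qed.
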